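(* Let $A$ be a monotonic modal algebra and let $S$ be a countable subset of $\mathcal{P}(A)$. Let $J_S(A)=\langle Q_S(A),\mathcal{V}_A\rangle$, where for each $F\in Q_S(A)$ $$\mathcal{V}_A(F)=\mathord{\uparrow}\bigl\{\{G\in Q_S(A)\mid x\in G\}\;\bigm|\; x\in A,\ \Box x\in F\bigr\},$$ the upward closure being taken in $\mathcal{P}(Q_S(A))$ ordered by inclusion. Then $J_S(A)$ is a monotonic neighborhood frame. Moreover, if $A$ is topped then $J_S(A)$ is topped, and if $A$ is cufi then $J_S(A)$ is cufi.
   Context: A modal algebra is a structure $\langle A;\lor,\land,-,\Box,0,1\rangle$ whose reduct $\langle A;\lor,\land,-,0,1\rangle$ is a Boolean algebra and $\Box$ is an arbitrary unary operation on $A$. It is monotonic if $\Box(x\land y)\le \Box x\land\Box y$ for all $x,y$ (equivalently $x\le y\Rightarrow \Box x\le\Box y$); topped if $\Box 1=1$; cufi if $\Box x\land\Box y\le\Box(x\land y)$ for all $x,y$. A prime filter of a Boolean algebra is a proper filter $F$ ($0\notin F$) such that $x\lor y\in F$ implies $x\in F$ or $y\in F$. For $S\subseteq\mathcal{P}(A)$, a Q-filter for $S$ is a prime filter $F$ such that for every $X\in S$: if the meet $\bigwedge X$ exists in $A$ and $X\subseteq F$, then $\bigwedge X\in F$. $Q_S(A)$ denotes the set of all Q-filters for $S$. A neighborhood frame is a pair $\langle C,\mathcal{V}\rangle$ with $C$ a non-empty set and $\mathcal{V}:C\to\mathcal{P}(\mathcal{P}(C))$. It is monotonic if for every $c\in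 C$, $\mathcal{V}(c)$ is upward closed under $\subseteq$ in $\mathcal{P}(C)$; topped if $C\in\mathcal{V}(c)$ for every $c$; cufi (closed under finite intersections) if for every $c$ and every non-empty finite $T\subseteq\mathcal{V}(c)$, $\bigcap T\in\mathcal{V}(c)$. *)

(* Defs.v *)
From HB Require Import structures.
From mathcomp Require Import all_boot all_order.
From mathcomp Require Import boolp classical_sets cardinality.
Set Implicit Arguments. Unset Strict Implicit. Unset Printing Implicit Defensive.
Import Order.TTheory.

Local Open Scope classical_set_scope.

Section ModalAlg.
(* A Boolean algebra is a complemented distributive lattice with top and
   bottom: [ctbDistrLatticeType d].  A modal algebra is such an A together
   with an arbitrary unary operation [box : A -> A]. *)
Context {d : Order.disp_t} {A : ctbDistrLatticeType d}.

Definition monotonic_alg (box : A -> A) : Prop :=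
  forall x y : A, (box (Order.meet x y) <= Order.meet (box x) (box y))%O.

Definition topped_alg (box : A -> A) : Prop := box Order.top = Order.top.

Definition cufi_alg (box : A -> A) : Prop :=
  forall x y : A, (Order.meet (box x) (box y) <= box (Order.meet x y))%O.

Definition is_filter (F : set A) : Prop :=
  F Order.top /\
  (forall x y, F x -> (x <= y)%O -> F y) /\
  (forall x y, F x -> F y -> F (Order.meet x y)).

Definition prime_filter (F : set A) : Prop :=
  is_filter F /\ ~ F Order.bottom /\
  (forall x y, F (Order.join x y) -> F x \/ F y).

Definition is_meet (X : set A) (m : A) : Prop :=
  (forall x, X x -> (m <= x)%O) /\
  (forall l, (forall x, X x -> (l <= x)%O) -> (l <= m)%O).

Definition Q_filter (S : set (set A)) (F : set A) : Prop :=
  prime_filter F /\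
  forall X, S X -> forall m, is_meet X m -> X `<=` F -> F m.

Definition QS (S : set (set A)) : set (set A) := [set F | Q_filter S F].

Definition VA (box : A -> A) (S : set (set A)) (F : set A)
  : set (set (set A)) :=
  [set Y | Y `<=` QS S /\
     exists x, F (box x) /\ [set G | QS S G /\ G x] `<=` Y].
End ModalAlg.

Section Frames.
Context {W : Type}.
(* A neighborhood frame <C, V> with C a subset of an ambient type W and
   V : C -> P(P(C)). *)
Definition nbhd_frame (C : set W) (V : W -> set (set W)) : Prop :=
  C !=set0 /\ forall c, C c -> forall X, V c X -> X `<=` C.

Definition monotonic_frame (C : set W) (V : W -> set (set W)) : Prop :=
  forall c, C c -> forall X Y, V c X -> X `<=` Y -> Y `<=` C -> V c Y.

Definition topped_frame (C : set W) (V : W -> set (set W)) : Prop :=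
  forall c, C c -> V c C.

Definition cufi_frame (C : set W) (V : W -> set (set W)) : Prop :=
  forall c, C c -> forall T : set (set W),
    finite_set T -> T !=set0 -> T `<=` V c -> V c (\bigcap_(X in T) X).
End Frames.

(* Main.v *)
Require Import Defs.
From mathcomp Require Import all_boot all_order.
From mathcomp Require Import boolp classical_sets cardinality.
Import Order.Theory.
Local Open Scope classical_set_scope.

Section Aux.
Context {d : Order.disp_t} {A : ctbDistrLatticeType d}.

Definition pf (F : set A) := is_filter F /\ ~ F Order.bottom.

Lemma le_bot_eq (x : A) : (x <= Order.bottom)%O -> x = Order.bottom.
Proof. by move=> h; apply/eqP; rewrite -lex0. Qed.

Lemma ultra (F0 : set A) : pf F0 -> exists U, prime_filter U /\ F0 `<=` U.
Proof.
move=> pF0.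
pose P := fun X : set A => (F0 `<=` X /\ pf X) \/ X = set0.
have [] := @Zorn_bigcup A P.
  move=> F FP tot.
  have [[X0 [FX0 [z X0z]]]|nex] := pselect (exists X, F X /\ X !=set0); last first.
    right; apply/seteqP; split=> // y [X FX Xy]; apply: nex; exists X; split=> //; by exists y.
  have filX : forall X, F X -> forall y, X y -> F0 `<=` X /\ pf X.
    move=> X FX y Xy; case: (FP X FX) => // eX; by rewrite eX in Xy.
  have [sub [[Xt [Xup Xm]] Xb]] := filX _ FX0 _ X0z.
  left; split; first by move=> y /sub Xy; exists X0.
  split; last by move=> [X FX Xb']; have [_ [_ ]] := filX _ FX _ Xb'.
  split; first by exists X0.
  split.
    move=> x y [X FX Xx] xy; exists X => //.
    by have [_ [[_ [h _]] _]] := filX _ FX _ Xx; apply: h xy.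
  move=> x y [X FX Xx] [Y FY Yy].
  have [_ [[_ [_ hX]] _]] := filX _ FX _ Xx.
  have [_ [[_ [_ hY]] _]] := filX _ FY _ Yy.
  case: (tot _ _ FX FY) => [XY|YX].
    by exists Y => //; apply: hY => //; apply: XY.
  by exists X => //; apply: hX => //; apply: YX.
move=> U [PU maxU].
case: PU => [[F0U [[Ut [Uup Um]] Ub]]|U0]; last first.
  exfalso; apply: (maxU F0); last by left; split.
  rewrite U0; split=> //; move=> /(_ Order.top).
  by case: pF0 => -[h _] _ /(_ h).
exists U; split=> //; split; first by split.
split => // x y Uxy; have [ux|nx] := pselect (U x); first by left.
have [uy|ny] := pselect (U y); first by right.
exfalso.
have key : forall z, ~ U z -> exists a, U a /\ (Order.meet a z <= Order.bottom)%O.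
  move=> z nz; apply: contrapT => hall'.
  have hall : forall a, ~ (U a /\ (Order.meet a z <= Order.bottom)%O) by move=> a h; apply: hall'; exists a.
  pose B := [set w | exists a, U a /\ (Order.meet a z <= w)%O].
  apply: (maxU B); last first.
    left; split.
      move=> w /F0U Uw; exists w; split => //; exact: leIl.
    split; last first.
      by move=> [a [Ua h]]; apply: (hall a).
    split; first by exists Order.top; split => //; exact: lex1.
    split; first by move=> u v [a [Ua h]] uv; exists a; split=> //; exact: le_trans uv.
    move=> u v [a [Ua ha]] [b [Ubb hb]]; exists (Order.meet a b); split; first exact: Um.
    rewrite lexI; apply/andP; split.
      by apply: le_trans ha; rewrite leI2 // leIl.
    by apply: le_trans hb; rewrite leI2 // leIr.
  split; first by move=> w Uw; exists w; split=> //; exact: leIl.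
  move=> BU; apply: nz; apply: BU; exists Order.top; split=> //; exact: leIr.
have [a [Ua ha]] := key _ nx.
have [b [Ubb hb]] := key _ ny.
apply: (Ub); have -> : Order.bottom = Order.meet (Order.meet a b) (Order.join x y).
  apply/esym/le_bot_eq; rewrite meetUr.
  rewrite leUx; apply/andP; split.
    by apply: le_trans ha; rewrite leI2 // leIl.
  by apply: le_trans hb; rewrite leI2 // leIr.
by apply: (Um) => //; apply: (Um).
Qed.

Definition good (S : set (set A)) (f : set A -> nat) n (a' : A) :=
  forall X, S X -> f X = n -> forall m, is_meet X m ->
    (a' <= m)%O \/ exists x, X x /\ (a' <= Order.compl x)%O.

Lemma step (S : set (set A)) (f : set A -> nat) :
  {in S &, injective f} -> forall (a : A) n, a <> Order.bottom ->
  exists a', a' <> Order.bottom /\ (a' <= a)%O /\ good S f n a'.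
Proof.
move=> finj a n anb.
have [[X0 [SX0 [fX0 [m0 mX0]]]]|nex] :=
  pselect (exists X, S X /\ f X = n /\ exists m, is_meet X m); last first.
  exists a; split=> //; split=> // X SX fX m mX; exfalso; apply: nex.
  by exists X; split=> //; split=> //; exists m.
have eqX : forall X, S X -> f X = n -> X = X0.
  by move=> X SX fX; apply: finj; rewrite ?inE //; rewrite fX fX0.
have [am|am] := pselect (Order.meet a m0 = Order.bottom).
  have [[x [X0x hx]]|nx] := pselect (exists x, X0 x /\ Order.meet a (Order.compl x) <> Order.bottom).
    exists (Order.meet a (Order.compl x)); split=> //; split; first exact: leIl.
    move=> X SX fX m mX; right; exists x; rewrite (eqX X SX fX); split=> //; exact: leIr.
  exfalso; apply: anb; rewrite -am; apply/eqP; rewrite eq_le leIl andbT.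
  rewrite lexI lexx /=; case: mX0 => _; apply => x X0x.
  have: Order.meet a (Order.compl x) == Order.bottom.
    by apply/eqP; apply: contrapT => h; apply: nx; exists x.
  by rewrite disj_leC complK.
exists (Order.meet a m0); split=> //; split; first exact: leIl.
move=> X SX fX m mX; left; rewrite (eqX X SX fX) in mX.
apply: le_trans (leIr _ _) _; case: mX => _; apply; by case: mX0.
Qed.

Lemma QS_nonempty (S : set (set A)) :
  (Order.bottom : A) <> Order.top -> countable S -> QS S !=set0.
Proof.
move=> bt /countable_injP [f finj].
have st := @step S f finj.
pose T := {a : A | a <> Order.bottom}.
have g0 : forall (p : T) n, {a' : T | (sval a' <= sval p)%O /\ good S f n (sval a')}.
  move=> [a ha] n; have /cid [a' [h1 h2]] := st a n ha.
  by exists (exist _ a' h1).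
pose g p n := sval (g0 p n).
have tnb : (Order.top : A) <> Order.bottom by move=> h; apply: bt; rewrite h.
pose sq := fix sq n := match n with 0 => exist _ Order.top tnb | k.+1 => g (sq k) k end.
have sqS : forall n, sval (sq n.+1) = sval (g (sq n) n) by [].
have dec : forall i j, (i <= j)%N -> (sval (sq j) <= sval (sq i))%O.
  move=> i j /subnK <-; elim: (j - i)%N => [|k IH] //=.
  apply: le_trans IH; rewrite /g; by case: (svalP (g0 (sq (k + i)%N) (k + i)%N)).
pose F0 := [set y | exists n, (sval (sq n) <= y)%O].
have pF0 : pf F0.
  split; last by move=> [n h]; apply: (svalP (sq n)); exact: le_bot_eq.
  split; first by exists 0%N; exact: lex1.
  split; first by move=> x y [n h] xy; exists n; exact: le_trans xy.
  move=> x y [n hx] [k hy]; exists (maxn n k); rewrite lexI; apply/andP; split.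
    by apply: le_trans hx; apply: dec; exact: leq_maxl.
  by apply: le_trans hy; apply: dec; exact: leq_maxr.
have [U [[[Ut [Uup Um]] [Ub Upr]] F0U]] := @ultra F0 pF0.
exists U; split; first by split=> //; split.
move=> X SX m mX XU.
have gd : good S f (f X) (sval (sq (f X).+1)).
  rewrite sqS /g; by case: (svalP (g0 (sq (f X)) (f X))).
have Ua : U (sval (sq (f X).+1)) by apply: F0U; exists (f X).+1.
case: (gd X SX erefl m mX) => [h|[x [Xx h]]]; first exact: Uup h.
exfalso; apply: Ub; rewrite -(meetxC x); apply: Um; first exact: XU.
exact: Uup h.
Qed.
End Aux.

Lemma QS_filt d (A : ctbDistrLatticeType d) (S : set (set A)) (c : set A) :
  QS S c -> c Order.top /\ (forall x y, c x -> (x <= y)%O -> c y) /\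
  (forall x y, c x -> c y -> c (Order.meet x y)).
Proof. by move=> [[h _] _]. Qed.

Theorem mainTheorem1 (d : Order.disp_t) (A : ctbDistrLatticeType d)
  (box : A -> A) (S : set (set A)) :
  (Order.bottom : A) <> Order.top ->
  monotonic_alg box ->
  countable S ->
  nbhd_frame (QS S) (VA box S) /\
  monotonic_frame (QS S) (VA box S) /\
  (topped_alg box -> topped_frame (QS S) (VA box S)) /\
  (cufi_alg box -> cufi_frame (QS S) (VA box S)).
Proof.
move=> bt mon cS.
split; first by split; [exact: QS_nonempty | move=> c _ X []].
split; first by move=> c _ X Y [_ [x [Fx sub]]] XY YQ; split=> //; exists x; split=> //; exact: subset_trans XY.
split.
  move=> top c /QS_filt [Ct _]; split=> //; exists Order.top; split; first by rewrite top.
  by move=> G [].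
move=> cufi c /QS_filt [Ct [Cup Cm]] T fT [Y0 TY0] TV.
have key : forall s : seq (set (set A)), [set` s] `<=` VA box S c -> s <> [::] ->
    exists x, c (box x) /\ forall Y, Y \in s -> [set G | QS S G /\ G x] `<=` Y.
  elim=> [//|Y s IH] sV _.
  have [_ [y [cy yY]]] := sV Y (mem_head _ _).
  case: s IH sV => [|Z s] IH sV.
    by exists y; split=> // Y'; rewrite inE => /eqP ->.
  have [||x [cx xs]] := IH.
  - by move=> W Ws; apply: sV; rewrite /= inE Ws orbT.
  - by [].
  exists (Order.meet x y); split.
    by apply: Cup (cufi x y); apply: Cm.
  have sub : forall u, [set G | QS S G /\ G (Order.meet x y)] `<=` [set G | QS S G /\ G u] ->
      [set G | QS S G /\ G (Order.meet x y)] `<=` [set G | QS S G /\ G u] by [].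
  move=> Y'; rewrite inE => /orP [/eqP ->|Ys].
    move=> G [QG Gxy]; apply: yY; split=> //.
    by case: (@QS_filt _ _ _ _ QG) => [_ [Gup _]]; exact: (Gup _ _ Gxy (leIr _ _)).
  move=> G [QG Gxy]; apply: (xs _ Ys); split=> //.
  by case: (@QS_filt _ _ _ _ QG) => [_ [Gup _]]; exact: (Gup _ _ Gxy (leIl _ _)).
have [s Ts] := (finite_seqP T).1 fT.
have [x [cx xs]] : exists x, c (box x) /\ forall Y, Y \in s -> [set G | QS S G /\ G x] `<=` Y.
  apply: key; first by rewrite -Ts.
  by move=> s0; move: TY0; rewrite Ts s0.
split.
  by move=> G hG; have [] := TV _ TY0; move=> h _; apply: h; apply: hG.
exists x; split=> // G hG Y TY; apply: (xs Y) => //.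
by move: TY; rewrite Ts.
Qed.
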